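(* Let $G=HN\le\mathrm{Sym}(\Omega)$ be a finite non-Frobenius $2$-transitive affine permutation group, where $N$ is the regular normal elementary abelian subgroup of order $p^k$ ($p$ prime) and $H$ is a point stabiliser, and suppose $\kappa(G)=2$. Write $N\setminus\{1\}=x^G$ and the set of derangements as $x^G\cup y^G$ with $y\in G\setminus N$. Then $|\mathrm C_H(x)|=p^br^c$ for some prime $r\ne p$ and integers $b,c\ge0$.
   Context: A derangement is an element fixing no point; $\kappa(G)$ is the number of conjugacy classes of derangements. A Frobenius group is a transitive non-regular group in which only the identity fixes more than one point. *)

(* Defs.v *)
From mathcomp Require Import all_boot all_fingroup all_solvable.
Set Implicit Arguments. Unset Strict Implicit. Unset Printing Implicit Defensive.

Definition derangement (T : finType) (g : {perm T}) : bool :=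
  [forall a : T, g a != a].

Definition derangements (T : finType) (G : {set {perm T}}) : {set {perm T}} :=
  [set g in G | derangement g].

Definition kappa (T : finType) (G : {set {perm T}}) : nat :=
  #|[set C in classes G | C \subset derangements G]|.

Definition frobenius_perm (T : finType) (G : {set {perm T}}) : Prop :=
  [/\ [transitive G, on [set: T] | 'P],
      (exists2 g, g \in G & (g != 1%g) && ~~ derangement g) &
      (forall g, g \in G -> 1 < #|[set a : T | g a == a]| -> g = 1%g)].

(* Main.v *)
Require Import Defs.
From mathcomp Require Import all_boot all_order all_fingroup all_solvable.
From mathcomp Require Import abelian.

Set Implicit Arguments. Unset Strict Implicit. Unset Printing Implicit Defensive.
Local Open Scope group_scope.

Lemma key (T : finType) (G N H : {group {perm T}}) (p : nat)
    (x y h : {perm T}) (a0 : T) (q : nat) :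
  prime p -> p.-abelem N -> N \subset G ->
  (forall a : T, 'C_N[a | 'P] = 1) ->
  H = 'C_G[a0 | 'P] :> {set {perm T}} ->
  x \in N -> N^#%g = x ^: G ->
  derangements G = x ^: G :|: y ^: G ->
  h \in 'C_H[x] -> prime q -> q != p -> #[h] = q ->
  #[y] = (q * p)%N.
Proof.
move=> pp abN sNG regN defH xN defNs defD /setIP[hH /cent1P chx] pq qp oh.
have hG : h \in G by move: hH; rewrite defH => /setIP[].
have xG : x \in G by apply: (subsetP sNG).
have x1 : x != 1.
  have : x \in x ^: G by apply: class_refl.
  by rewrite -defNs => /setD1P[].
have ox : #[x] = p by apply: (abelem_order_p abN).
have co : coprime #[h] #[x].
  by rewrite oh ox prime_coprime // dvdn_prime2.
have ohx : #[h * x] = (q * p)%N by rewrite orderM // oh ox.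
have gG : h * x \in G by rewrite groupM.
have gN : h * x \notin N.
  apply/negP => hxN.
  have hN : h \in N by rewrite -(mulgK x h) groupM // groupV.
  have ha0 : h \in 'C_N[a0 | 'P].
    rewrite inE hN /=; move: hH; rewrite defH => /setIP[_ ->] //.
  move: ha0; rewrite regN => /set1P h1.
  by move: oh; rewrite h1 order1 => q1; move: pq; rewrite -q1.
have gD : h * x \in derangements G.
  rewrite inE gG /=; apply/forallP => b; apply/negP => /eqP fixb.
  have : (h * x) ^+ q \in 'C_N[b | 'P].
    rewrite expgMn // -oh expg_order mul1g.
    rewrite inE groupX //=; apply/astab1P; rewrite /= apermE.
    rewrite -[x ^+ _](mul1g) -(expg_order h) -expgMn //.
    by apply: permX_fix.
  rewrite regN => /set1P.
  rewrite expgMn // -oh expg_order mul1g => /eqP.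
  rewrite -order_dvdn ox oh ; rewrite dvdn_prime2 // => /eqP pq'.
  by move: qp; rewrite pq' eqxx.
move: gD; rewrite defD => /setUP[]; first by rewrite -defNs => /setD1P[_ hxN]; rewrite hxN in gN.
by move=> /imsetP[z _ e]; rewrite -ohx e orderJ.
Qed.

Theorem lemma4p4 (T : finType) (G N H : {group {perm T}}) (p k : nat)
    (x y : {perm T}) (a0 : T) :
  [transitive^2 G, on [set: T] | 'P] ->
  ~ frobenius_perm G ->
  prime p -> p.-abelem N -> #|N| = (p ^ k)%N ->
  N <| G -> [transitive N, on [set: T] | 'P] ->
  (forall a : T, 'C_N[a | 'P] = 1) ->
  H = 'C_G[a0 | 'P] :> {set {perm T}} ->
  G = (H * N)%g :> {set {perm T}} ->
  kappa G = 2 ->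
  x \in N -> N^#%g = x ^: G ->
  y \in G :\: N -> derangements G = x ^: G :|: y ^: G ->
  exists r b c : nat, [/\ prime r, r != p & #|'C_H[x]| = (p ^ b * r ^ c)%N].
Proof.
move=> _ _ pp abN _ nNG _ regN defH _ _ xN defNs _ defD.
have sNG := normal_sub nNG.
set n := #|'C_H[x]|.
have n0 : 0 < n by apply: cardG_gt0.
have K : forall q, prime q -> q != p -> q %| n -> #[y] = (q * p)%N.
  move=> q pq qp qn; have [h hC oh] := Cauchy pq qn.
  exact: (key pp abN sNG regN defH xN defNs defD hC pq qp oh).
have [r [pr rp rn]] : exists r, [/\ prime r, r != p &
    forall q, prime q -> q != p -> q %| n -> q = r].
  case: (boolP [exists q : 'I_n.+1, [&& prime q, q != p :> nat & q %| n]]).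
    move=> /existsP[q /and3P[pq qp qn]]; exists q; split=> // q' pq' q'p q'n.
    have := K _ pq' q'p q'n; rewrite (K _ pq qp qn) => /eqP.
    by rewrite eqn_mul2r (gtn_eqF (prime_gt0 pp)) /= => /eqP.
  move=> /existsPn nq.
  exists (if p == 2 then 3 else 2); split; first by case: ifP.
    by case: ifP => [/eqP -> // | /negbT]; rewrite eq_sym.
  move=> q pq qp qn; have := nq (@Ordinal n.+1 q (dvdn_leq n0 qn : q < n.+1)).
  by rewrite /= pq qp qn.
have rnat : r.-nat (n`_p^')%N.
  apply/(pnatP _ (part_gt0 _ _)) => d pd dn.
  have dn' : d %| n := dvdn_trans dn (dvdn_part _ _).
  have dp : d != p.
    apply/eqP=> dp; have := part_pnat p^' n.
    by move/(pnatP _ (part_gt0 _ _)) => /(_ d pd dn); rewrite !inE dp eqxx.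
  by rewrite (rn d pd dp dn') inE.
have [c ec] := p_natP rnat.
exists r, (logn p n), c; split=> //.
by rewrite -p_part -ec partnC.
Qed.
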